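(* For each $r\in\mathcal R_n$ and $a\in A(r)$, the map $A(r^a)\to A(r)$, $(b_1,\dots,b_n,b_{n+1})\mapsto(b_1,\dots,b_n)$, is surjective.
   Context: $\mathcal R_n$ is the set of real symmetric $n\times n$ matrices with zero diagonal, nonnegative entries and $r_{i,k}+r_{k,j}\ge r_{i,j}$. For $r\in\mathcal R_n$, $A(r)=\{a\in\mathbb R^n: |a_i-a_j|\le r_{i,j}\le a_i+a_j\ \forall i,j\}$, and for $a\in A(r)$, $r^a\in\mathcal R_{n+1}$ is $r$ bordered by $a$ as last row and column (with $0$ on the diagonal). *)

(* Defs.v *)
From HB Require Import structures.
From mathcomp Require Import all_boot all_order all_algebra.
From mathcomp Require Import reals.
Set Implicit Arguments. Unset Strict Implicit. Unset Printing Implicit Defensive.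
Import Order.TTheory GRing.Theory Num.Theory.
Local Open Scope ring_scope.

Section Defs.
Variable R : realType.

Definition in_Rn (n : nat) (r : 'M[R]_n) : Prop :=
  (forall i j, r i j = r j i) /\
  (forall i, r i i = 0) /\
  (forall i j, 0 <= r i j) /\
  (forall i j k, r i j <= r i k + r k j).

Definition in_A (n : nat) (r : 'M[R]_n) (a : 'rV[R]_n) : Prop :=
  forall i j, `|a ord0 i - a ord0 j| <= r i j /\ r i j <= a ord0 i + a ord0 j.

(* r^a : r bordered by a as last row and column, 0 on the diagonal.
   The last index is ord_max; the old indices i : 'I_n are lift ord_max i. *)
Definition border (n : nat) (r : 'M[R]_n) (a : 'rV[R]_n) : 'M[R]_n.+1 :=
  \matrix_(i, j)
    match unlift ord_max i, unlift ord_max j with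
    | Some i', Some j' => r i' j'
    | Some i', None => a ord0 i'
    | None, Some j' => a ord0 j'
    | None, None => 0
    end.

Definition proj_last (n : nat) (b : 'rV[R]_n.+1) : 'rV[R]_n :=
  \row_i b ord0 (lift ord_max i).

End Defs.

(* Main.v *)
Require Import Defs.
From HB Require Import structures.
From mathcomp Require Import all_boot all_order all_algebra.
From mathcomp Require Import reals.
From mathcomp Require Import lra.
Import Order.TTheory GRing.Theory Num.Theory.
Local Open Scope ring_scope.

Theorem corollary1 (R : realType) (n : nat) (r : 'M[R]_n) (a : 'rV[R]_n) :
  in_Rn r -> in_A r a ->
  forall b : 'rV[R]_n, in_A r b ->
  exists c : 'rV[R]_n.+1, in_A (border r a) c /\ proj_last c = b.
Proof.
move=> _ hA b hB.
have a0 : forall i, 0 <= a ord0 i.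
  move=> i; have [_ h] := hA i i; have [h1 _] := hA i i.
  rewrite subrr normr0 in h1; have := le_trans h1 h; lra.
have b0 : forall i, 0 <= b ord0 i.
  move=> i; have [_ h] := hB i i; have [h1 _] := hB i i.
  rewrite subrr normr0 in h1; have := le_trans h1 h; lra.
set x := \big[Num.max/0]_i `|a ord0 i - b ord0 i|.
have x0 : 0 <= x.
  rewrite /x; elim/big_ind: _ => //= u v hu hv; rewrite le_max hu //.
have xge : forall i, `|a ord0 i - b ord0 i| <= x.
  move=> i; rewrite /x (bigD1 i) //= le_max lexx //.
have xle : forall j, x <= a ord0 j + b ord0 j.
  move=> j; rewrite /x; elim/big_ind: _ => //=.
  - have := a0 j; have := b0 j; lra.
  - move=> u v hu hv; rewrite ge_max hu hv //.
  - move=> i _; have [h1 h2] := hA i j; have [h3 h4] := hB i j.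
    have [h5 h6] := hA j i; have [h7 h8] := hB j i.
    move: h1 h3 h5 h7; rewrite !ler_norml => /andP[? ?] /andP[? ?] /andP[? ?] /andP[? ?].
    apply/andP; split; lra.
exists (\row_j match unlift ord_max j with Some j' => b ord0 j' | None => x end).
split; last first.
  by apply/rowP => i; rewrite /proj_last !mxE liftK.
move=> i j; rewrite /border !mxE.
case: (unliftP ord_max i) => [i' _|_]; case: (unliftP ord_max j) => [j' _|_].
- by have := hB i' j'.
- have := xge i'; have := xle i'; rewrite distrC !ler_norml.
  move=> h /andP[? ?]; split; first (apply/andP; split); lra.
- have := xge j'; have := xle j'; rewrite !ler_norml.
  move=> h /andP[? ?]; split; first (apply/andP; split); lra.
- rewrite subrr normr0; split => //; lra.
Qed.
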